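(* For every $0<\varepsilon<1$ there exists an integer $\Theta=\Theta(\varepsilon)>0$ depending only on $\varepsilon$ (and not on $q$-independent data such as $m,n$) such that for all $m,n$, all $A\in\mathbb F_q^{m\times n}$ and all nonempty $U\subseteq[n]$ the following holds. Choose $\boldsymbol\theta\in\{1,\dots,\Theta\}$ uniformly at random and then $(\mathbf i_1,\dots,\mathbf i_{\boldsymbol\theta})\in U^{\boldsymbol\theta}$ uniformly at random, and let $\hat A=A[\mathbf i_1,\dots,\mathbf i_{\boldsymbol\theta}]$. Then $$\mathbb P\big[\mu_{\hat A,U}\text{ is }\varepsilon\text{-symmetric}\big]>1-\varepsilon.$$
   Context: $q\ge2$ is a fixed prime power. For a matrix $A\in\mathbb F_q^{m\times n}$ the Boltzmann distribution $\mu_A$ is the uniform distribution on $\ker(A)\subseteq\mathbb F_q^n$; for $U\subseteq[n]$, $\mu_{A,U}$ denotes its marginal on the coordinates in $U$, and $\mu_{A,i}$, $\mu_{A,i,j}$ denote one- and two-coordinate marginals. For $i_1,\dots,i_\ell\in[n]$, $A[i_1,\dots,i_\ell]$ is the matrix obtained from $A$ by appending $\ell$ rows, the $j$-th of which has entry $1$ in column $i_j$ and zeros elsewhere. A probability measure $\mu$ on $\Omega^U$ ($\Omega$, $U$ finite) is $\varepsilon$-symmetric if $\sum_{i,j\in U}d_{TV}(\mu_{i,j},\mu_i\otimes\mu_j)<\varepsilon|U|^2$, where $\mu_i,\mu_{i,j}$ are marginals and $d_{TV}$ is total variation distance. *)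

(* Defs.v *)
From HB Require Import structures.
From mathcomp Require Import all_boot all_order all_algebra.
Set Implicit Arguments. Unset Strict Implicit. Unset Printing Implicit Defensive.
Import Order.TTheory GRing.Theory Num.Theory.
Local Open Scope ring_scope.

(* Probability measures on a finite type are given by their mass functions
   T -> rat.  *)

Definition dTV (T : finType) (p q : T -> rat) : rat :=
  2^-1 * \sum_(x : T) `|p x - q x|.

Definition marg1 (I O : finType) (mu : {ffun I -> O} -> rat) (i : I) : O -> rat :=
  fun a => \sum_(x : {ffun I -> O} | x i == a) mu x.

Definition marg2 (I O : finType) (mu : {ffun I -> O} -> rat) (i j : I)
  : O * O -> rat :=
  fun ab => \sum_(x : {ffun I -> O} | (x i, x j) == ab) mu x.

Definition prod_meas (O : finType) (p r : O -> rat) : O * O -> rat :=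
  fun ab => p ab.1 * r ab.2.

Definition eps_symmetric (I O : finType) (mu : {ffun I -> O} -> rat) (eps : rat)
  : bool :=
  \sum_(i : I) \sum_(j : I)
     dTV (marg2 mu i j) (prod_meas (marg1 mu i) (marg1 mu j))
  < eps * (#|I| ^ 2)%:R.

Definition kerA (F : finFieldType) m n (A : 'M[F]_(m, n)) : {set 'cV[F]_n} :=
  [set x : 'cV[F]_n | A *m x == 0].

Definition boltz (F : finFieldType) m n (A : 'M[F]_(m, n)) : 'cV[F]_n -> rat :=
  fun x => if x \in kerA A then (#|kerA A|%:R)^-1 else 0.

Definition boltzU (F : finFieldType) m n (A : 'M[F]_(m, n)) (U : {set 'I_n})
  : {ffun {i : 'I_n | i \in U} -> F} -> rat :=
  fun y => \sum_(x : 'cV[F]_n | [forall i, y i == x (val i) ord0]) boltz A x.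

(* A[i_1,...,i_l] : append l rows, the j-th being the unit row e_{i_j} *)
Definition pin_rows (F : finFieldType) m n (A : 'M[F]_(m, n)) l
  (idx : 'I_l -> 'I_n) : 'M[F]_(m + l, n) :=
  col_mx A (\matrix_(j < l, k < n) (k == idx j)%:R).

Arguments boltzU F m n A U : clear implicits.
Arguments boltzU {F m n} A U.
Arguments pin_rows {F m n} A {l} idx.

(* Main.v *)
Require Import Defs.
From HB Require Import structures.
From mathcomp Require Import all_boot all_order all_algebra ring lra.
Import Order.TTheory GRing.Theory Num.Theory.
Local Open Scope ring_scope.

Section Gen.
Variables (F : finFieldType) (n : nat).
Implicit Types (K : {set 'cV[F]_n}) (x w : 'cV[F]_n) (U : {set 'I_n}).

Definition subsp K := [/\ 0 \in K, forall x y, x \in K -> y \in K -> x + y \in K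
  & forall (c : F) x, x \in K -> c *: x \in K].

Lemma subspB K x (y : 'cV[F]_n) : subsp K -> x \in K -> y \in K -> x - y \in K.
Proof. case=> _ HD HZ xK yK; apply: HD => //; rewrite -scaleN1r; exact: HZ. Qed.

Definition fib (T : eqType) K (phi : 'cV[F]_n -> T) (c : T) := [set x in K | phi x == c].
Arguments fib {T} K phi c.

Lemma fib_transl (T : eqType) K phi (c d : T) w : subsp K -> w \in K ->
  (forall x, (phi (x + w) == d) = (phi x == c)) -> #|fib K phi c| = #|fib K phi d|.
Proof.
move=> sK wK H.
have -> : fib K phi d = (fun x => x + w) @: fib K phi c.
  apply/setP=> y; rewrite inE; apply/andP/imsetP.
  - case=> yK yd. exists (y - w); last by rewrite subrK.
    by rewrite inE subspB //= -(H (y - w)) subrK.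
  - case=> x; rewrite inE => /andP[xK px] ->; split.
      by case: sK => _ HD _; apply: HD.
    by rewrite H.
by rewrite card_imset //; exact: addIr.
Qed.

Lemma fib_sum (T : finType) K (phi : 'cV[F]_n -> T) :
  (\sum_(c : T) #|fib K phi c|)%N = #|K|.
Proof.
rewrite -sum1_card. under eq_bigr => c _ do rewrite -sum1_card.
rewrite (exchange_big_dep (mem K)) /=; last by move=> c x _; rewrite inE => /andP[].
apply: eq_bigr => x xK. rewrite (big_pred1 (phi x)) //.
by move=> c; rewrite /= inE xK /= eq_sym.
Qed.

Lemma fib_unif (T : finType) K phi (c0 : T) :
  (forall c d, #|fib K phi c| = #|fib K phi d|) -> (#|fib K phi c0| * #|T|)%N = #|K|.
Proof.
move=> H; rewrite -(@fib_sum T K phi).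
under eq_bigr => c _ do rewrite (H c c0).
by rewrite sum_nat_const mulnC.
Qed.

Definition unif K x : rat := if x \in K then (#|K|%:R)^-1 else 0.
Definition muU K (U : {set 'I_n}) : {ffun {i : 'I_n | i \in U} -> F} -> rat :=
  fun y => \sum_(x : 'cV[F]_n | [forall i, y i == x (val i) ord0]) unif K x.

Lemma boltzUE m (M : 'M[F]_(m,n)) U : boltzU M U = muU (kerA M) U.
Proof. by []. Qed.

Definition res (U : {set 'I_n}) x : {ffun {i | i \in U} -> F} := [ffun i => x (val i) ord0].

Lemma muU_sum K U (g : pred {ffun {i : 'I_n | i \in U} -> F}) :
  \sum_(y | g y) muU K U y = \sum_(x | g (res U x)) unif K x.
Proof.
rewrite /muU (exchange_big_dep xpredT) // [RHS]big_mkcond.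
apply: eq_bigr => x _.
have Ey (y : {ffun {i : 'I_n | i \in U} -> F}) : [forall i, y i == x (val i) ord0] = (y == res U x).
  apply/forallP/eqP => [H|->]; last by move=> i; rewrite ffunE.
  by apply/ffunP=> i; rewrite ffunE; exact/eqP.
rewrite (eq_bigl (fun y => (y == res U x) && g (res U x))); last first.
  by move=> y; rewrite Ey andbC; case: eqP => [->|_].
case: (g (res U x)).
  by rewrite (eq_bigl (fun y => y == res U x)) ?big_pred1_eq // => y; rewrite andbT.
by rewrite big_pred0 // => y; rewrite andbF.
Qed.

Lemma unif_sum K (P : pred 'cV[F]_n) :
  \sum_(x | P x) unif K x = #|[set x in K | P x]|%:R / #|K|%:R.
Proof.
rewrite /unif -big_mkcondr sumr_const -(mulr_natr (#|K|%:R)^-1) mulrC; congr (_%:R * _).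
by apply: eq_card => x; rewrite !inE andbC.
Qed.

Lemma marg1E K U i a :
  marg1 (muU K U) i a = #|fib K (fun x => x (val i) ord0) a|%:R / #|K|%:R.
Proof. by rewrite /marg1 muU_sum unif_sum /fib; congr (_%:R / _); apply: eq_card => x; rewrite !inE ffunE. Qed.

Lemma marg2E K U i j ab :
  marg2 (muU K U) i j ab =
    #|fib K (fun x => (x (val i) ord0, x (val j) ord0)) ab|%:R / #|K|%:R.
Proof. by rewrite /marg2 muU_sum unif_sum /fib; congr (_%:R / _); apply: eq_card => x; rewrite !inE !ffunE. Qed.

End Gen.
Arguments subsp {F n} K.
Arguments fib {F n T} K phi c.
Arguments unif {F n} K x.
Arguments muU {F n} K U y.
Arguments res {F n} U x.

Section Core.
Variables (F : finFieldType) (n : nat).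
Implicit Types (K : {set 'cV[F]_n}) (x w : 'cV[F]_n) (U : {set 'I_n}).

Definition free K (j : 'I_n) := [exists x in K, x j ord0 != 0].
Definition Ki K (i : 'I_n) := [set x in K | x i ord0 == 0].
Definition Phi K U := #|[set j : {i : 'I_n | i \in U} | free K (val j)]|.
Definition bad K (i j : 'I_n) := free K j && ~~ free (Ki K i) j.

Lemma subsp_gt0 K : subsp K -> (0 < #|K|)%N.
Proof. by case=> K0 _ _; rewrite card_gt0; apply/set0Pn; exists 0. Qed.

Lemma fib_sum_rat (T : finType) K (phi : 'cV[F]_n -> T) : subsp K ->
  \sum_(c : T) #|fib K phi c|%:R / #|K|%:R = 1 :> rat.
Proof.
move=> sK; rewrite -mulr_suml -natr_sum fib_sum divff //.
by rewrite pnatr_eq0 -lt0n subsp_gt0.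
Qed.

Lemma notfree K j : ~~ free K j -> forall x, x \in K -> x j ord0 = 0.
Proof.
move=> nf x xK; apply/eqP; apply/negPn; apply: contra nf => nz.
by apply/existsP; exists x; rewrite xK.
Qed.

Lemma shift_eq (y c d e : F) : e = d - c -> (y + e == d) = (y == c).
Proof.
move=> ->; apply/eqP/eqP => H; last by rewrite H; ring.
by rewrite -[y](addrK (d - c)) H; ring.
Qed.

Lemma fib1_unif K (i : 'I_n) v c : subsp K -> v \in K -> v i ord0 != 0 ->
  (#|fib K (fun x => x i ord0) c| * #|F|)%N = #|K|.
Proof.
move=> sK vK nz; apply: fib_unif => a b.
apply: (@fib_transl _ _ _ K _ a b (((b - a) / v i ord0) *: v)) => //.
  by case: sK => _ _ HZ; apply: HZ.
by move=> x; rewrite mxE [X in x i ord0 + X]mxE divfK //; apply: shift_eq.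
Qed.

Lemma fib2_unif K (i j : 'I_n) v u c : subsp K -> v \in K -> v i ord0 != 0 ->
  u \in K -> u i ord0 = 0 -> u j ord0 != 0 ->
  (#|fib K (fun x => (x i ord0, x j ord0)) c| * #|{: F * F}|)%N = #|K|.
Proof.
move=> sK vK nzv uK ui nzu; apply: fib_unif => -[a1 a2] [b1 b2].
pose al := (b1 - a1) / v i ord0.
pose be := ((b2 - a2) - al * v j ord0) / u j ord0.
apply: (@fib_transl _ _ _ K _ _ _ (al *: v + be *: u)) => //.
  case: sK => _ HD HZ; apply: HD; exact: HZ.
move=> x; rewrite !xpair_eqE !mxE ui mulr0 addr0.
have h1 : al * v i ord0 = b1 - a1 by rewrite /al divfK.
have h2 : al * v j ord0 + be * u j ord0 = b2 - a2 by rewrite /be divfK //; ring.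
by rewrite (shift_eq _ _ _ _ h1) (shift_eq _ _ _ _ h2).
Qed.

Variable (U : {set 'I_n}).
Local Notation I := {i : 'I_n | i \in U}.

Lemma dTV_le1 K (i j : I) : subsp K ->
  dTV (marg2 (muU K U) i j) (prod_meas (marg1 (muU K U) i) (marg1 (muU K U) j)) <= 1.
Proof.
move=> sK; rewrite /dTV.
have p0 ab : 0 <= marg2 (muU K U) i j ab by rewrite marg2E divr_ge0 ?ler0n.
have q0 ab : 0 <= prod_meas (marg1 (muU K U) i) (marg1 (muU K U) j) ab.
  by rewrite /prod_meas !marg1E mulr_ge0 // divr_ge0 ?ler0n.
have S2 : \sum_ab marg2 (muU K U) i j ab = 1.
  by under eq_bigr => ab _ do rewrite marg2E; apply: fib_sum_rat.
have S1 (k : I) : \sum_a marg1 (muU K U) k a = 1.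
  by under eq_bigr => a _ do rewrite marg1E; apply: fib_sum_rat.
have Sq : \sum_ab prod_meas (marg1 (muU K U) i) (marg1 (muU K U) j) ab = 1.
  rewrite /prod_meas -(pair_bigA _ (fun a b => marg1 (muU K U) i a * marg1 (muU K U) j b)) /=.
  under eq_bigr => a _ do rewrite -mulr_sumr S1 mulr1.
  by rewrite S1.
apply: (@le_trans _ _ (2^-1 * (\sum_ab marg2 (muU K U) i j ab +
   \sum_ab prod_meas (marg1 (muU K U) i) (marg1 (muU K U) j) ab))).
  rewrite ler_pM2l ?invr_gt0 // -big_split /=; apply: ler_sum => ab _.
  apply: le_trans (ler_normB _ _) _; by rewrite !ger0_norm.
by rewrite S2 Sq mulVf.
Qed.

Lemma dTV_good K (i j : I) : subsp K -> ~~ bad K (val i) (val j) ->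
  dTV (marg2 (muU K U) i j) (prod_meas (marg1 (muU K U) i) (marg1 (muU K U) j)) = 0.
Proof.
move=> sK nb.
suff H : forall ab, marg2 (muU K U) i j ab = prod_meas (marg1 (muU K U) i) (marg1 (muU K U) j) ab.
  by rewrite /dTV big1 ?mulr0 // => ab _; rewrite H subrr normr0.
move=> [a b]; rewrite marg2E /prod_meas !marg1E /=.
have kpos := subsp_gt0 _ sK.
have k0 : #|K|%:R != 0 :> rat by rewrite pnatr_eq0 -lt0n.
move: nb; rewrite /bad negb_and negbK => /orP[nfj | fKij].
  have Hj := notfree _ _ nfj.
  case: (eqVneq b 0) => [->|nb].
    have e1 : #|fib K (fun x => (x (val i) ord0, x (val j) ord0)) (a,0)| =
              #|fib K (fun x => x (val i) ord0) a|.
      apply: eq_card => x; rewrite !inE; case xK: (x \in K) => //=.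
      by rewrite Hj // xpair_eqE eqxx andbT.
    have e2 : #|fib K (fun x => x (val j) ord0) 0| = #|K|.
      apply: eq_card => x; rewrite !inE; case xK: (x \in K) => //=.
      by rewrite Hj // eqxx.
    by rewrite e1 e2 divff // mulr1.
  have e1 : #|fib K (fun x => (x (val i) ord0, x (val j) ord0)) (a,b)| = 0%N.
    apply: eq_card0 => x; rewrite !inE; case xK: (x \in K) => //=.
    by rewrite Hj // xpair_eqE (eq_sym (0:F)) (negbTE nb) andbF.
  have e2 : #|fib K (fun x => x (val j) ord0) b| = 0%N.
    apply: eq_card0 => x; rewrite !inE; case xK: (x \in K) => //=.
    by rewrite Hj // (eq_sym (0:F)) (negbTE nb).
  by rewrite e1 e2 !mul0r mulr0.
case: (boolP (free K (val i))) => [fi | nfi]; last first.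
  have Hi := notfree _ _ nfi.
  case: (eqVneq a 0) => [->|na].
    have e1 : #|fib K (fun x => (x (val i) ord0, x (val j) ord0)) (0,b)| =
              #|fib K (fun x => x (val j) ord0) b|.
      apply: eq_card => x; rewrite !inE; case xK: (x \in K) => //=.
      by rewrite Hi // xpair_eqE eqxx.
    have e2 : #|fib K (fun x => x (val i) ord0) 0| = #|K|.
      apply: eq_card => x; rewrite !inE; case xK: (x \in K) => //=.
      by rewrite Hi // eqxx.
    by rewrite e1 e2 divff // mul1r.
  have e1 : #|fib K (fun x => (x (val i) ord0, x (val j) ord0)) (a,b)| = 0%N.
    apply: eq_card0 => x; rewrite !inE; case xK: (x \in K) => //=.
    by rewrite Hi // xpair_eqE (eq_sym (0:F)) (negbTE na).
  have e2 : #|fib K (fun x => x (val i) ord0) a| = 0%N.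
    apply: eq_card0 => x; rewrite !inE; case xK: (x \in K) => //=.
    by rewrite Hi // (eq_sym (0:F)) (negbTE na).
  by rewrite e1 e2 !mul0r.
move/existsP: fi => [v /andP[vK nzv]].
move/existsP: fKij => [u /andP[]]; rewrite inE => /andP[uK /eqP ui] nzu.
have e2 := @fib2_unif _ _ _ _ _ (a,b) sK vK nzv uK ui nzu.
have e1 := @fib1_unif _ _ _ a sK vK nzv.
have e1' := @fib1_unif _ _ _ b sK uK nzu.
rewrite card_prod in e2.
have qn0 : (#|F| != 0)%N.
  by apply/eqP=> q0; move: kpos; rewrite -e1 q0 muln0.
have q0 : #|F|%:R != 0 :> rat by rewrite pnatr_eq0.
rewrite -[in RHS](mulfK q0 #|fib K _ a|%:R) -[in RHS](mulfK q0 #|fib K _ b|%:R).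
rewrite -[in LHS](mulfK (mulf_neq0 q0 q0) #|fib K _ (a,b)|%:R).
rewrite -!natrM e1 e1' e2.
by field; rewrite q0 k0.
Qed.

Lemma core K eps : subsp K -> ~~ eps_symmetric (muU K U) eps ->
  eps * (#|{: I}| ^ 2)%:R <= \sum_(i : I) ((Phi K U)%:R - (Phi (Ki K (val i)) U)%:R).
Proof.
move=> sK; rewrite /eps_symmetric -leNgt => H; apply: le_trans H _.
apply: ler_sum => i _.
apply: (@le_trans _ _ (\sum_(j : I) (bad K (val i) (val j))%:R)).
  apply: ler_sum => j _; case: (boolP (bad K (val i) (val j))) => b.
    exact: dTV_le1.
  by rewrite dTV_good.
have E : ((\sum_(j : I) (bad K (val i) (val j) : nat)) + Phi (Ki K (val i)) U)%N = Phi K U.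
  rewrite /Phi -(cardsID [set j : I | free (Ki K (val i)) (val j)] [set j : I | free K (val j)]).
  rewrite addnC; congr (_ + _)%N.
    apply: eq_card => j; rewrite !inE; symmetry; apply: andb_idl.
    move/existsP => [x /andP[]]; rewrite inE => /andP[xK _] nz.
    by apply/existsP; exists x; rewrite xK.
  rewrite -sum1_card [RHS]big_mkcond /=; apply: eq_bigr => j _.
  by rewrite !inE /bad andbC; case: (_ && _).
by rewrite -E natrD addrK natr_sum.
Qed.

End Core.

Arguments free {F n} K j.
Arguments Ki {F n} K i.
Arguments Phi {F n} K U.
Arguments bad {F n} K i j.

Lemma kerA_subsp (F : finFieldType) m n (M : 'M[F]_(m, n)) : subsp (kerA M).
Proof.
split; first by rewrite inE mulmx0.
  by move=> x y; rewrite !inE mulmxDr => /eqP-> /eqP->; rewrite addr0.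
by move=> c x; rewrite !inE -scalemxAr => /eqP->; rewrite scaler0.
Qed.

Lemma free_Ki (F : finFieldType) n (K : {set 'cV[F]_n}) i j :
  free (Ki K i) j -> free K j.
Proof.
move/existsP => [x /andP[]]; rewrite inE => /andP[xK _] nz.
by apply/existsP; exists x; rewrite xK.
Qed.

Lemma Phi_Ki (F : finFieldType) n (K : {set 'cV[F]_n}) i U :
  (Phi (Ki K i) U <= Phi K U)%N.
Proof. by apply: subset_leq_card; apply/subsetP => j; rewrite !inE; exact: free_Ki. Qed.

Section Pin.
Variables (F : finFieldType) (m n : nat) (A : 'M[F]_(m, n)) (U : {set 'I_n}).
Local Notation I := {i : 'I_n | i \in U}.

Definition kp th (t : {ffun 'I_th -> I}) := kerA (pin_rows A (fun j => val (t j))).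
Arguments kp {th} t.

Lemma in_kp th (t : {ffun 'I_th -> I}) (x : 'cV[F]_n) :
  (x \in kp t) = (A *m x == 0) && [forall j, x (val (t j)) ord0 == 0].
Proof.
rewrite inE /pin_rows mul_col_mx col_mx_eq0; congr (_ && _).
apply/eqP/forallP => [H j | H].
  move/matrixP: H => /(_ j ord0).
  rewrite !mxE (bigD1 (val (t j))) //= mxE eqxx mul1r big1 ?addr0 => [->|k nk] //.
  by rewrite mxE (negbTE nk) mul0r.
apply/matrixP => j k; rewrite !mxE (bigD1 (val (t j))) //= mxE eqxx mul1r.
rewrite (ord1 k) (eqP (H j)) big1 ?addr0 // => k' nk.
by rewrite mxE (negbTE nk) mul0r.
Qed.

Definition ext th (t : {ffun 'I_th -> I}) (i : I) : {ffun 'I_th.+1 -> I} :=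
  [ffun k => if unlift ord_max k is Some k' then t k' else i].
Arguments ext {th} t i.

Lemma kp_ext th (t : {ffun 'I_th -> I}) i : kp (ext t i) = Ki (kp t) (val i).
Proof.
apply/setP => x; rewrite in_kp inE in_kp -andbA; congr (_ && _).
apply/forallP/andP => [H | [/forallP H1 H2] k].
  split.
    by apply/forallP => j; move: (H (lift ord_max j)); rewrite ffunE liftK.
  by move: (H ord_max); rewrite ffunE unlift_none.
by rewrite ffunE; case: unliftP => [j _|_] //=; exact: H1.
Qed.

Lemma sum_ext th (G : {ffun 'I_th.+1 -> I} -> rat) :
  \sum_s G s = \sum_(t : {ffun 'I_th -> I}) \sum_(i : I) G (ext t i).
Proof.
rewrite [RHS]pair_bigA (reindex (fun p : {ffun 'I_th -> I} * I => ext p.1 p.2)) //=.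
exists (fun s => ([ffun k => s (lift ord_max k)], s ord_max)).
  move=> [t i] _ /=; congr pair; last by rewrite ffunE unlift_none.
  by apply/ffunP => k; rewrite !ffunE liftK.
move=> s _; apply/ffunP => k; rewrite ffunE /=.
by case: unliftP => [j ->|->]; rewrite ?ffunE.
Qed.

Lemma cardI : #|{: I}| = #|U|.
Proof. by rewrite card_sig; apply: eq_card. Qed.

Definition Psi th := \sum_(t : {ffun 'I_th -> I}) (Phi (kp t) U)%:R : rat.
Definition NS eps th := ~: [set t : {ffun 'I_th -> I} |
   eps_symmetric (boltzU (pin_rows A (fun j => val (t j))) U) eps].

Lemma step eps th :
  eps * (#|U| ^ 2)%:R * #|NS eps th|%:R <= #|U|%:R * Psi th - Psi th.+1.
Proof.
have E (t : {ffun 'I_th -> I}) : #|U|%:R * (Phi (kp t) U)%:R - \sum_(i : I) (Phi (kp (ext t i)) U)%:R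
   = \sum_(i : I) ((Phi (kp t) U)%:R - (Phi (Ki (kp t) (val i)) U)%:R) :> rat.
  under eq_bigr => i _ do rewrite kp_ext.
  by rewrite sumrB sumr_const cardI mulr_natl.
have -> : #|U|%:R * Psi th - Psi th.+1 =
   \sum_(t : {ffun 'I_th -> I}) \sum_(i : I) ((Phi (kp t) U)%:R - (Phi (Ki (kp t) (val i)) U)%:R).
  by rewrite /Psi sum_ext mulr_sumr -sumrB; apply: eq_bigr => t _; exact: E.
have -> : eps * (#|U| ^ 2)%:R * #|NS eps th|%:R =
   \sum_(t : {ffun 'I_th -> I}) (if t \in NS eps th then eps * (#|U| ^ 2)%:R else 0).
  by rewrite -big_mkcond /= sumr_const mulr_natr.
apply: ler_sum => t _; case: ifP => h.
  have H := @core F n U (kp t) eps (kerA_subsp _ _ _ _); move: h; rewrite !inE => /H; rewrite cardI; apply.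
by apply: sumr_ge0 => i _; rewrite subr_ge0 ler_nat; exact: Phi_Ki.
Qed.

Lemma Psi_le th : Psi th <= #|U|%:R * #|U|%:R ^+ th.
Proof.
rewrite /Psi; apply: (@le_trans _ _ (\sum_(t : {ffun 'I_th -> I}) #|U|%:R)).
  apply: ler_sum => t _; rewrite ler_nat -cardI; exact: max_card.
by rewrite sumr_const card_ffun card_ord cardI -(mulr_natr (#|U|%:R)) natrX.
Qed.

Definition gg th := Psi th / #|U|%:R ^+ th.
Definition EE eps th : rat := #|NS eps th|%:R / #|U|%:R ^+ th.

Lemma gg_ge0 th : 0 <= gg th.
Proof. by rewrite /gg divr_ge0 ?exprn_ge0 ?ler0n // sumr_ge0 // => t _; rewrite ler0n. Qed.

Hypothesis U0 : U != set0.

Lemma Npos : 0 < #|U|%:R :> rat.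
Proof. by rewrite ltr0n card_gt0. Qed.

Lemma gg_le th : gg th <= #|U|%:R.
Proof. by rewrite /gg ler_pdivrMr ?exprn_gt0 ?Npos // Psi_le. Qed.

Lemma step' eps th : eps * #|U|%:R * EE eps th <= gg th - gg th.+1.
Proof.
have N0 : #|U|%:R != 0 :> rat by rewrite gt_eqF // Npos.
have Nt0 : #|U|%:R ^+ th != 0 :> rat by rewrite expf_neq0.
have := step eps th.
move/(ler_wpM2r (_ : 0 <= (#|U|%:R ^+ th * #|U|%:R)^-1)).
have -> : eps * (#|U| ^ 2)%:R * #|NS eps th|%:R * (#|U|%:R ^+ th * #|U|%:R)^-1
   = eps * #|U|%:R * EE eps th.
  by rewrite /EE natrX; field; rewrite Nt0 N0.
have -> : (#|U|%:R * Psi th - Psi th.+1) / (#|U|%:R ^+ th * #|U|%:R) = gg th - gg th.+1.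
  by rewrite /gg exprSr; field; rewrite Nt0 N0.
by apply; rewrite invr_ge0 mulr_ge0 ?exprn_ge0 ?ler0n.
Qed.

Lemma sumE eps Th : 0 < eps -> eps * \sum_(1 <= th < Th.+1) EE eps th <= 1.
Proof.
move=> e0.
have H1 : \sum_(1 <= th < Th.+1) (eps * #|U|%:R * EE eps th) <= gg 1 - gg Th.+1.
  apply: le_trans (ler_sum _ (fun th _ => step' eps th)) _.
  rewrite -opprB -telescope_sumr // -sumrN.
  by apply: ler_sum => k _; rewrite opprB.
have H2 : gg 1 - gg Th.+1 <= #|U|%:R.
  by apply: le_trans (gg_le 1); rewrite lerBlDr lerDl gg_ge0.
move: (le_trans H1 H2); rewrite -mulr_sumr mulrAC -[X in _ <= X]mul1r.
by rewrite ler_pM2r ?Npos.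
Qed.


End Pin.

Theorem lemma2p3 (F : finFieldType) (eps : rat) :
  0 < eps -> eps < 1 ->
  exists Theta : nat, (0 < Theta)%N /\
    forall (m n : nat) (A : 'M[F]_(m, n)) (U : {set 'I_n}),
      U != set0 ->
      (Theta%:R)^-1 *
        \sum_(1 <= th < Theta.+1)
          (#|[set t : {ffun 'I_th -> {i : 'I_n | i \in U}} |
               eps_symmetric (boltzU (pin_rows A (fun j => val (t j))) U) eps]|%:R
           / (#|U| ^ th)%:R)
      > 1 - eps.
Proof.
move=> e0 e1.
set B := Num.Def.archi_bound (eps^-1 ^+ 2).
have HB : eps^-1 ^+ 2 < B%:R by apply: archi_boundP; rewrite exprn_ge0 // invr_ge0 ltW.
exists B.+1; split => // m n A U U0.
set Th := B.+1.
have HS := sumE F m n A U U0 eps Th e0.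
have Np := Npos n U U0.
have key th : #|[set t : {ffun 'I_th -> {i : 'I_n | i \in U}} |
               eps_symmetric (boltzU (pin_rows A (fun j => val (t j))) U) eps]|%:R
           / (#|U| ^ th)%:R = 1 - EE F m n A U eps th.
  have := cardsC [set t : {ffun 'I_th -> {i : 'I_n | i \in U}} |
               eps_symmetric (boltzU (pin_rows A (fun j => val (t j))) U) eps].
  rewrite card_ffun card_ord cardI => C.
  have Nt0 : #|U|%:R ^+ th != 0 :> rat by rewrite expf_neq0 // gt_eqF.
  rewrite /EE /NS -natrX -C natrD; field.
  by rewrite -natrD C natrX.
under eq_bigr => th _ do rewrite key.
rewrite sumrB sumr_const_nat subn1 /=.
set S := \sum_(1 <= th < Th.+1) EE F m n A U eps th in HS *.
have T0 : 0 < Th%:R :> rat by rewrite ltr0n.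
have h1 : 1 < eps ^+ 2 * Th%:R.
  have e20 : 0 < eps ^+ 2 by rewrite exprn_gt0.
  have : eps ^+ 2 * (eps ^+ 2)^-1 < eps ^+ 2 * Th%:R.
    rewrite ltr_pM2l //; apply: lt_trans (_ : B%:R < Th%:R).
      by rewrite -exprVn.
    by rewrite ltr_nat.
  by rewrite mulfV // (negbT (gt_eqF e20)).
have hS : S < eps * Th%:R by nra.
by rewrite mulrBr mulVf ?(negbT (gt_eqF T0)) // ltrD2l ltrN2 mulrC ltr_pdivrMr.
Qed.
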